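(* Let $G$ be a graph with vertex set $A \cup B \cup C$, where $A, B, C$ are pairwise disjoint, $|A| = 2$, and $|B|, |C| \in \{3, 4\}$. Suppose that the bipartite graph of edges of $G$ between $B$ and $A \cup C$ is a complete bipartite graph between $B$ and $A \cup C$ minus a matching which has at most two edges between $B$ and $C$, and that $G$ has no edges between $A$ and $C$. Then there is a fractional triangle packing $\omega$ in $G$, assigning positive weight only to triangles that intersect exactly two of the sets $A, B, C$, such that $\omega(e) = 1/2$ for every edge $e$ of $G$ with both ends in $A$ or both ends in $C$, and $\omega(e) = 1$ for every edge $e$ of $G$ with both ends in $B$.
   Context: A fractional triangle packing in a graph $G$ is a function $\omega$ from the set of triangles of $G$ to $[0,1]$ such that $\omega(e) := \sum_{T \ni e}\omega(T) \le 1$ for every edge $e$ of $G$, where the sum is over triangles $T$ of $G$ containing $e$. *)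

(* Defs.v *)
From mathcomp Require Import all_boot all_order all_algebra.
Set Implicit Arguments. Unset Strict Implicit. Unset Printing Implicit Defensive.
Import Order.TTheory GRing.Theory Num.Theory.

Definition simple_graph (T : finType) (adj : rel T) : Prop :=
  symmetric adj /\ irreflexive adj.

Definition is_triangle (T : finType) (adj : rel T) (t : {set T}) : bool :=
  (#|t| == 3) && [forall x in t, forall y in t, (x != y) ==> adj x y].

Definition edge_load (R : numDomainType) (T : finType) (adj : rel T)
  (w : {set T} -> R) (x y : T) : R :=
  (\sum_(t : {set T} | is_triangle adj t && (x \in t) && (y \in t)) w t)%R.

Definition frac_triangle_packing (R : numDomainType) (T : finType) (adj : rel T)
  (w : {set T} -> R) : Prop :=
  (forall t, ~~ is_triangle adj t -> w t = 0%R) /\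
  (forall t, is_triangle adj t -> (0 <= w t <= 1)%R) /\
  (forall x y, adj x y -> (edge_load adj w x y <= 1)%R).

Definition meets_exactly_two (T : finType) (A B C t : {set T}) : bool :=
  (((t :&: A != set0) : nat) + ((t :&: B != set0) : nat)
     + ((t :&: C != set0) : nat) == 2)%N.

(* Main.v *)
Require Import Defs.
From mathcomp Require Import all_boot all_order all_algebra zify.
Import Order.TTheory GRing.Theory Num.Theory.
Set Implicit Arguments. Unset Strict Implicit. Unset Printing Implicit Defensive.

Module Conc.
Definition NONE := 15.
Definition pA (r : nat) := r < 2.
Definition pB (r : nat) := (2 <= r) && (r < 6).
Definition pC (r : nat) := 6 <= r.
Definition inV (m n r : nat) := (r < 2) || ((2 <= r) && (r < 2 + m)) || ((6 <= r) && (r < 6 + n)).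
Definition mt (pb : seq nat) (u v : nat) := pB u && (nth NONE pb (u - 2) == v).
Definition samep u v := (pA u && pA v) || (pB u && pB v) || (pC u && pC v).
Definition fulladj pb u v :=
  (u != v) && (if samep u v then true
               else if pB u then ~~ mt pb u v
               else if pB v then ~~ mt pb v u else false).
Definition ptype (pb : seq nat) u :=
  let p := nth NONE pb (u - 2) in if p < 2 then 1 else if p < 10 then 2 else 0.
Definition two_parts (s : seq nat) := (has pA s + has pB s + has pC s == 2)%N.
Definition key (pb : seq nat) (s : seq nat) : option nat :=
  match s with
  | [:: a; b; c] =>
    if pA a && pA b && pB c then
      (if ptype pb c == 1 then None else Some (ptype pb c))
    else if pA a && pB b && pB c then
      (if mt pb b a || mt pb c a then None else
       Some (27 + (a \in pb) * 9 + minn (ptype pb b) (ptype pb c) * 3 + maxn (ptype pb b) (ptype pb c)))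
    else if pB a && pB b && pC c then
      (if mt pb a c || mt pb b c then None else
       Some (54 + (c \in pb) * 9 + minn (ptype pb a) (ptype pb b) * 3 + maxn (ptype pb a) (ptype pb b)))
    else if pB a && pC b && pC c then
      (if mt pb a b || mt pb a c then None else
       Some (81 + ((b \in pb) + (c \in pb)) * 9 + ptype pb a * 3))
    else None
  | _ => None
  end.
Definition rowidx m n (pb : seq nat) :=
  (m - 3) * 18 + (n - 3) * 9 + count (fun p => p < 2) pb * 3 + count (fun p => (6 <= p) && (p < 10)) pb.
Definition look (k : nat) (row : seq (nat * nat)) :=
  foldr (fun p acc => if p.1 == k then p.2 else acc) 0 row.
Definition table : seq (seq nat) := [::
  [:: 48; 0; 0; 0; 0; 0; 0; 0; 0; 0; 0; 0; 0; 0; 0; 0; 0; 0; 0; 0; 0; 0; 0; 0; 0; 0; 0; 0; 0; 0; 0; 0; 0; 0; 0; 0; 0; 0; 0; 0; 0; 0; 0; 0; 0; 0; 0; 0; 0; 0; 0; 0; 0; 0; 96; 0; 0; 0; 0; 0; 0; 0; 0; 0; 0; 0; 0; 0; 0; 0; 0; 0; 0; 0; 0; 0; 0; 0; 0; 0; 0; 48; 0; 0; 0; 0; 0; 0; 0; 0; 0; 0; 0; 0; 0; 0; 0; 0; 0; 0; 0; 0; 0; 0; 0; 0; 0; 0];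
  [:: 72; 0; 0; 0; 0; 0; 0; 0; 0; 0; 0; 0; 0; 0; 0; 0; 0; 0; 0; 0; 0; 0; 0; 0; 0; 0; 0; 72; 0; 0; 0; 0; 0; 0; 0; 0; 0; 0; 0; 0; 0; 0; 0; 0; 0; 0; 0; 0; 0; 0; 0; 0; 0; 0; 0; 0; 144; 0; 0; 0; 0; 0; 0; 144; 0; 0; 0; 0; 0; 0; 0; 0; 0; 0; 0; 0; 0; 0; 0; 0; 0; 72; 0; 0; 0; 0; 0; 0; 0; 0; 72; 0; 0; 0; 0; 0; 0; 0; 0; 0; 0; 0; 0; 0; 0; 0; 0; 0];
  [:: 144; 0; 0; 0; 0; 0; 0; 0; 0; 0; 0; 0; 0; 0; 0; 0; 0; 0; 0; 0; 0; 0; 0; 0; 0; 0; 0; 0; 0; 0; 0; 0; 0; 0; 0; 144; 0; 0; 0; 0; 0; 0; 0; 0; 0; 0; 0; 0; 0; 0; 0; 0; 0; 0; 0; 0; 144; 0; 0; 0; 0; 0; 0; 0; 0; 144; 0; 0; 0; 0; 0; 0; 0; 0; 0; 0; 0; 0; 0; 0; 0; 0; 0; 0; 0; 0; 0; 0; 0; 0; 0; 0; 0; 0; 0; 0; 144; 0; 0; 144; 0; 0; 0; 0; 0; 0; 0; 0];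
  [:: 72; 0; 0; 0; 0; 0; 0; 0; 0; 0; 0; 0; 0; 0; 0; 0; 0; 0; 0; 0; 0; 0; 0; 0; 0; 0; 0; 0; 0; 0; 0; 0; 0; 0; 0; 0; 0; 0; 0; 0; 0; 0; 0; 0; 0; 0; 0; 0; 0; 0; 0; 0; 0; 0; 96; 96; 0; 0; 0; 0; 0; 0; 0; 0; 0; 0; 0; 0; 0; 0; 0; 0; 0; 0; 0; 0; 0; 0; 0; 0; 0; 48; 0; 0; 48; 0; 0; 0; 0; 0; 0; 0; 0; 0; 0; 0; 0; 0; 0; 0; 0; 0; 0; 0; 0; 0; 0; 0];
  [:: 144; 0; 0; 0; 0; 0; 0; 0; 0; 0; 0; 0; 0; 0; 0; 0; 0; 0; 0; 0; 0; 0; 0; 0; 0; 0; 0; 0; 0; 144; 0; 0; 0; 0; 0; 0; 0; 0; 0; 0; 0; 0; 0; 0; 0; 0; 0; 0; 0; 0; 0; 0; 0; 0; 0; 72; 72; 0; 0; 144; 0; 0; 0; 0; 144; 0; 0; 0; 0; 0; 0; 0; 0; 0; 0; 0; 0; 0; 0; 0; 0; 72; 0; 0; 0; 0; 0; 72; 0; 0; 72; 0; 0; 72; 0; 0; 0; 0; 0; 0; 0; 0; 0; 0; 0; 0; 0; 0];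
  [:: 0; 0; 72; 0; 0; 0; 0; 0; 0; 0; 0; 0; 0; 0; 0; 0; 0; 0; 0; 0; 0; 0; 0; 0; 0; 0; 0; 0; 0; 0; 0; 0; 0; 0; 0; 216; 0; 0; 0; 0; 0; 0; 0; 0; 72; 0; 0; 0; 0; 0; 0; 0; 0; 0; 0; 0; 0; 0; 0; 144; 0; 0; 0; 0; 0; 0; 0; 0; 144; 0; 0; 0; 0; 0; 0; 0; 0; 0; 0; 0; 0; 0; 0; 0; 0; 0; 0; 0; 0; 0; 0; 0; 0; 0; 0; 0; 144; 0; 0; 0; 0; 0; 144; 0; 0; 0; 0; 0];
  [:: 144; 0; 0; 0; 0; 0; 0; 0; 0; 0; 0; 0; 0; 0; 0; 0; 0; 0; 0; 0; 0; 0; 0; 0; 0; 0; 0; 0; 0; 0; 0; 0; 0; 0; 0; 0; 0; 0; 0; 0; 0; 0; 0; 0; 0; 0; 0; 0; 0; 0; 0; 0; 0; 0; 0; 96; 0; 0; 96; 0; 0; 0; 0; 0; 0; 0; 0; 0; 0; 0; 0; 0; 0; 0; 0; 0; 0; 0; 0; 0; 0; 48; 0; 0; 48; 0; 0; 0; 0; 0; 0; 0; 0; 0; 0; 0; 0; 0; 0; 0; 0; 0; 0; 0; 0; 0; 0; 0];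
  [:: 0; 0; 144; 0; 0; 0; 0; 0; 0; 0; 0; 0; 0; 0; 0; 0; 0; 0; 0; 0; 0; 0; 0; 0; 0; 0; 0; 0; 0; 0; 0; 0; 0; 0; 0; 0; 0; 0; 0; 0; 0; 72; 0; 0; 0; 0; 0; 0; 0; 0; 0; 0; 0; 0; 0; 0; 0; 0; 72; 108; 0; 0; 0; 0; 0; 0; 0; 144; 0; 0; 0; 0; 0; 0; 0; 0; 0; 0; 0; 0; 0; 0; 0; 0; 36; 0; 0; 72; 0; 0; 0; 0; 0; 72; 0; 0; 0; 0; 0; 0; 0; 0; 0; 0; 0; 0; 0; 0];
  [:: 0; 0; 0; 0; 0; 0; 0; 0; 0; 0; 0; 0; 0; 0; 0; 0; 0; 0; 0; 0; 0; 0; 0; 0; 0; 0; 0; 0; 0; 0; 0; 0; 0; 0; 0; 0; 0; 0; 0; 0; 0; 0; 0; 0; 0; 0; 0; 0; 0; 0; 0; 0; 0; 0; 0; 0; 0; 0; 0; 0; 0; 0; 0; 0; 0; 0; 0; 0; 0; 0; 0; 0; 0; 0; 0; 0; 0; 0; 0; 0; 0; 0; 0; 0; 0; 0; 0; 0; 0; 0; 0; 0; 0; 0; 0; 0; 0; 0; 0; 0; 0; 0; 0; 0; 0; 0; 0; 0];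
  [:: 48; 0; 0; 0; 0; 0; 0; 0; 0; 0; 0; 0; 0; 0; 0; 0; 0; 0; 0; 0; 0; 0; 0; 0; 0; 0; 0; 0; 0; 0; 0; 0; 0; 0; 0; 0; 0; 0; 0; 0; 0; 0; 0; 0; 0; 0; 0; 0; 0; 0; 0; 0; 0; 0; 72; 0; 0; 0; 0; 0; 0; 0; 0; 0; 0; 0; 0; 0; 0; 0; 0; 0; 0; 0; 0; 0; 0; 0; 0; 0; 0; 48; 0; 0; 0; 0; 0; 0; 0; 0; 0; 0; 0; 0; 0; 0; 0; 0; 0; 0; 0; 0; 0; 0; 0; 0; 0; 0];
  [:: 72; 0; 0; 0; 0; 0; 0; 0; 0; 0; 0; 0; 0; 0; 0; 0; 0; 0; 0; 0; 0; 0; 0; 0; 0; 0; 0; 72; 0; 0; 0; 0; 0; 0; 0; 0; 0; 0; 0; 0; 0; 0; 0; 0; 0; 0; 0; 0; 0; 0; 0; 0; 0; 0; 24; 0; 96; 0; 0; 0; 0; 0; 0; 72; 0; 0; 0; 0; 0; 0; 0; 0; 0; 0; 0; 0; 0; 0; 0; 0; 0; 48; 0; 0; 0; 0; 0; 48; 0; 0; 72; 0; 0; 0; 0; 0; 0; 0; 0; 0; 0; 0; 0; 0; 0; 0; 0; 0];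
  [:: 144; 0; 0; 0; 0; 0; 0; 0; 0; 0; 0; 0; 0; 0; 0; 0; 0; 0; 0; 0; 0; 0; 0; 0; 0; 0; 0; 0; 0; 72; 0; 0; 0; 0; 0; 0; 0; 0; 0; 0; 0; 0; 0; 0; 0; 0; 0; 0; 0; 0; 0; 0; 0; 0; 0; 0; 36; 0; 0; 0; 0; 0; 144; 0; 0; 72; 0; 0; 0; 0; 0; 0; 0; 0; 0; 0; 0; 0; 0; 0; 0; 144; 0; 0; 0; 0; 0; 0; 0; 0; 36; 0; 0; 0; 0; 0; 108; 0; 0; 144; 0; 0; 0; 0; 0; 0; 0; 0];
  [:: 72; 0; 0; 0; 0; 0; 0; 0; 0; 0; 0; 0; 0; 0; 0; 0; 0; 0; 0; 0; 0; 0; 0; 0; 0; 0; 0; 0; 0; 0; 0; 0; 0; 0; 0; 0; 0; 0; 0; 0; 0; 0; 0; 0; 0; 0; 0; 0; 0; 0; 0; 0; 0; 0; 72; 72; 0; 0; 0; 0; 0; 0; 0; 0; 0; 0; 0; 0; 0; 0; 0; 0; 0; 0; 0; 0; 0; 0; 0; 0; 0; 48; 0; 0; 48; 0; 0; 0; 0; 0; 0; 0; 0; 0; 0; 0; 0; 0; 0; 0; 0; 0; 0; 0; 0; 0; 0; 0];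
  [:: 144; 0; 0; 0; 0; 0; 0; 0; 0; 0; 0; 0; 0; 0; 0; 0; 0; 0; 0; 0; 0; 0; 0; 0; 0; 0; 0; 0; 0; 144; 0; 0; 0; 0; 0; 0; 0; 0; 0; 0; 0; 0; 0; 0; 0; 0; 0; 0; 0; 0; 0; 0; 0; 0; 0; 72; 48; 0; 0; 96; 0; 0; 0; 0; 72; 0; 0; 0; 0; 0; 0; 0; 0; 0; 0; 0; 0; 0; 0; 0; 0; 48; 0; 0; 24; 0; 0; 72; 0; 0; 72; 0; 0; 72; 0; 0; 0; 0; 0; 0; 0; 0; 0; 0; 0; 0; 0; 0];
  [:: 0; 0; 72; 0; 0; 0; 0; 0; 0; 0; 0; 0; 0; 0; 0; 0; 0; 0; 0; 0; 0; 0; 0; 0; 0; 0; 0; 0; 0; 0; 0; 0; 72; 0; 0; 144; 0; 0; 0; 0; 0; 0; 0; 0; 0; 0; 0; 0; 0; 0; 0; 0; 0; 0; 0; 0; 0; 0; 0; 72; 0; 0; 72; 0; 0; 0; 0; 0; 72; 0; 0; 0; 0; 0; 0; 0; 0; 0; 0; 0; 0; 0; 0; 0; 72; 0; 0; 36; 0; 0; 0; 0; 0; 36; 0; 0; 108; 0; 0; 0; 0; 0; 144; 0; 0; 0; 0; 0];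
  [:: 144; 0; 0; 0; 0; 0; 0; 0; 0; 0; 0; 0; 0; 0; 0; 0; 0; 0; 0; 0; 0; 0; 0; 0; 0; 0; 0; 0; 0; 0; 0; 0; 0; 0; 0; 0; 0; 0; 0; 0; 0; 0; 0; 0; 0; 0; 0; 0; 0; 0; 0; 0; 0; 0; 0; 72; 0; 0; 72; 0; 0; 0; 0; 0; 0; 0; 0; 0; 0; 0; 0; 0; 0; 0; 0; 0; 0; 0; 0; 0; 0; 48; 0; 0; 48; 0; 0; 0; 0; 0; 0; 0; 0; 0; 0; 0; 0; 0; 0; 0; 0; 0; 0; 0; 0; 0; 0; 0];
  [:: 0; 0; 144; 0; 0; 0; 0; 0; 0; 0; 0; 0; 0; 0; 0; 0; 0; 0; 0; 0; 0; 0; 0; 0; 0; 0; 0; 0; 0; 0; 0; 0; 0; 0; 0; 0; 0; 0; 0; 0; 0; 72; 0; 0; 0; 0; 0; 0; 0; 0; 0; 0; 0; 0; 0; 0; 0; 0; 72; 72; 0; 0; 0; 0; 0; 0; 0; 72; 0; 0; 0; 0; 0; 0; 0; 0; 0; 0; 0; 0; 0; 0; 0; 0; 36; 0; 0; 72; 0; 0; 0; 0; 0; 72; 0; 0; 0; 0; 0; 0; 0; 0; 0; 0; 0; 0; 0; 0];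
  [:: 0; 0; 0; 0; 0; 0; 0; 0; 0; 0; 0; 0; 0; 0; 0; 0; 0; 0; 0; 0; 0; 0; 0; 0; 0; 0; 0; 0; 0; 0; 0; 0; 0; 0; 0; 0; 0; 0; 0; 0; 0; 0; 0; 0; 0; 0; 0; 0; 0; 0; 0; 0; 0; 0; 0; 0; 0; 0; 0; 0; 0; 0; 0; 0; 0; 0; 0; 0; 0; 0; 0; 0; 0; 0; 0; 0; 0; 0; 0; 0; 0; 0; 0; 0; 0; 0; 0; 0; 0; 0; 0; 0; 0; 0; 0; 0; 0; 0; 0; 0; 0; 0; 0; 0; 0; 0; 0; 0];
  [:: 36; 0; 0; 0; 0; 0; 0; 0; 0; 0; 0; 0; 0; 0; 0; 0; 0; 0; 0; 0; 0; 0; 0; 0; 0; 0; 0; 36; 0; 0; 0; 0; 0; 0; 0; 0; 0; 0; 0; 0; 0; 0; 0; 0; 0; 0; 0; 0; 0; 0; 0; 0; 0; 0; 72; 0; 0; 0; 0; 0; 0; 0; 0; 0; 0; 0; 0; 0; 0; 0; 0; 0; 0; 0; 0; 0; 0; 0; 0; 0; 0; 36; 0; 0; 0; 0; 0; 0; 0; 0; 0; 0; 0; 0; 0; 0; 0; 0; 0; 0; 0; 0; 0; 0; 0; 0; 0; 0];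
  [:: 48; 0; 0; 0; 0; 0; 0; 0; 0; 0; 0; 0; 0; 0; 0; 0; 0; 0; 0; 0; 0; 0; 0; 0; 0; 0; 0; 48; 0; 48; 0; 0; 0; 0; 0; 0; 0; 0; 0; 0; 0; 0; 0; 0; 0; 0; 0; 0; 0; 0; 0; 0; 0; 0; 48; 0; 96; 0; 0; 0; 0; 0; 0; 96; 0; 0; 0; 0; 0; 0; 0; 0; 0; 0; 0; 0; 0; 0; 0; 0; 0; 48; 0; 0; 0; 0; 0; 0; 0; 0; 48; 0; 0; 0; 0; 0; 0; 0; 0; 0; 0; 0; 0; 0; 0; 0; 0; 0];
  [:: 72; 0; 0; 0; 0; 0; 0; 0; 0; 0; 0; 0; 0; 0; 0; 0; 0; 0; 0; 0; 0; 0; 0; 0; 0; 0; 0; 144; 0; 36; 0; 0; 0; 0; 0; 72; 0; 0; 0; 0; 0; 0; 0; 0; 0; 0; 0; 0; 0; 0; 0; 0; 0; 0; 0; 0; 72; 0; 0; 0; 0; 0; 144; 0; 0; 144; 0; 0; 0; 0; 0; 0; 0; 0; 0; 0; 0; 0; 0; 0; 0; 0; 0; 0; 0; 0; 0; 0; 0; 0; 72; 0; 0; 0; 0; 0; 0; 0; 0; 72; 0; 0; 0; 0; 0; 0; 0; 0];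
  [:: 48; 0; 0; 0; 0; 0; 0; 0; 0; 0; 0; 0; 0; 0; 0; 0; 0; 0; 0; 0; 0; 0; 0; 0; 0; 0; 0; 96; 48; 0; 0; 0; 0; 0; 0; 0; 0; 0; 0; 0; 0; 0; 0; 0; 0; 0; 0; 0; 0; 0; 0; 0; 0; 0; 64; 80; 0; 0; 0; 0; 0; 0; 0; 0; 0; 0; 0; 0; 0; 0; 0; 0; 0; 0; 0; 0; 0; 0; 0; 0; 0; 40; 0; 0; 24; 0; 0; 0; 0; 0; 0; 0; 0; 0; 0; 0; 0; 0; 0; 0; 0; 0; 0; 0; 0; 0; 0; 0];
  [:: 72; 0; 0; 0; 0; 0; 0; 0; 0; 0; 0; 0; 0; 0; 0; 0; 0; 0; 0; 0; 0; 0; 0; 0; 0; 0; 0; 216; 0; 0; 0; 0; 288; 0; 0; 0; 72; 0; 0; 0; 0; 0; 0; 0; 0; 0; 0; 0; 0; 0; 0; 0; 0; 0; 0; 72; 144; 0; 0; 0; 0; 0; 0; 0; 144; 0; 0; 0; 0; 0; 0; 0; 0; 0; 0; 0; 0; 0; 0; 0; 0; 0; 0; 0; 144; 0; 0; 0; 0; 0; 72; 0; 0; 0; 0; 0; 0; 0; 0; 0; 0; 0; 0; 0; 0; 0; 0; 0];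
  [:: 72; 0; 36; 0; 0; 0; 0; 0; 0; 0; 0; 0; 0; 0; 0; 0; 0; 0; 0; 0; 0; 0; 0; 0; 0; 0; 0; 0; 216; 0; 0; 0; 36; 0; 0; 216; 0; 0; 108; 0; 0; 0; 0; 0; 0; 0; 0; 0; 0; 0; 0; 0; 0; 0; 0; 0; 108; 0; 0; 72; 0; 0; 72; 0; 36; 72; 0; 0; 180; 0; 0; 0; 0; 0; 0; 0; 0; 0; 0; 0; 0; 0; 0; 0; 0; 0; 0; 0; 0; 0; 36; 0; 0; 72; 0; 0; 36; 0; 0; 144; 0; 0; 0; 0; 0; 0; 0; 0];
  [:: 72; 0; 0; 0; 0; 0; 0; 0; 0; 0; 0; 0; 0; 0; 0; 0; 0; 0; 0; 0; 0; 0; 0; 0; 0; 0; 0; 0; 0; 0; 0; 0; 0; 0; 0; 0; 144; 36; 0; 0; 0; 0; 0; 0; 0; 0; 0; 0; 0; 0; 0; 0; 0; 0; 0; 84; 0; 0; 96; 0; 0; 0; 0; 0; 0; 0; 0; 0; 0; 0; 0; 0; 0; 0; 0; 0; 0; 0; 0; 0; 0; 60; 0; 0; 12; 0; 0; 0; 0; 0; 0; 0; 0; 0; 0; 0; 0; 0; 0; 0; 0; 0; 0; 0; 0; 0; 0; 0];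
  [:: 0; 0; 144; 0; 0; 0; 0; 0; 0; 0; 0; 0; 0; 0; 0; 0; 0; 0; 0; 0; 0; 0; 0; 0; 0; 0; 0; 0; 0; 0; 0; 0; 0; 0; 0; 0; 0; 144; 144; 0; 0; 0; 0; 0; 0; 0; 0; 0; 0; 0; 0; 0; 0; 0; 0; 72; 0; 0; 0; 144; 0; 0; 0; 0; 0; 0; 0; 288; 0; 0; 0; 0; 0; 0; 0; 0; 0; 0; 0; 0; 0; 0; 0; 0; 72; 0; 0; 0; 0; 0; 144; 0; 0; 0; 0; 0; 0; 0; 0; 0; 0; 0; 0; 0; 0; 0; 0; 0];
  [:: 0; 0; 72; 0; 0; 0; 0; 0; 0; 0; 0; 0; 0; 0; 0; 0; 0; 0; 0; 0; 0; 0; 0; 0; 0; 0; 0; 0; 0; 0; 0; 0; 0; 0; 0; 0; 0; 0; 0; 0; 0; 144; 0; 0; 72; 0; 0; 0; 0; 0; 0; 0; 0; 0; 0; 0; 0; 0; 144; 36; 0; 0; 144; 0; 0; 0; 0; 72; 108; 0; 0; 0; 0; 0; 0; 0; 0; 0; 0; 0; 0; 0; 0; 0; 0; 0; 0; 0; 0; 0; 0; 0; 0; 36; 0; 0; 72; 0; 0; 0; 0; 0; 72; 0; 0; 0; 0; 0];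
  [:: 36; 0; 0; 0; 0; 0; 0; 0; 0; 0; 0; 0; 0; 0; 0; 0; 0; 0; 0; 0; 0; 0; 0; 0; 0; 0; 0; 24; 0; 0; 0; 0; 0; 0; 0; 0; 0; 0; 0; 0; 0; 0; 0; 0; 0; 0; 0; 0; 0; 0; 0; 0; 0; 0; 60; 0; 0; 0; 0; 0; 0; 0; 0; 0; 0; 0; 0; 0; 0; 0; 0; 0; 0; 0; 0; 0; 0; 0; 0; 0; 0; 36; 0; 0; 0; 0; 0; 0; 0; 0; 0; 0; 0; 0; 0; 0; 0; 0; 0; 0; 0; 0; 0; 0; 0; 0; 0; 0];
  [:: 48; 0; 0; 0; 0; 0; 0; 0; 0; 0; 0; 0; 0; 0; 0; 0; 0; 0; 0; 0; 0; 0; 0; 0; 0; 0; 0; 72; 0; 0; 0; 0; 0; 0; 0; 0; 0; 0; 0; 0; 0; 0; 0; 0; 0; 0; 0; 0; 0; 0; 0; 0; 0; 0; 24; 0; 96; 0; 0; 0; 0; 0; 0; 72; 0; 0; 0; 0; 0; 0; 0; 0; 0; 0; 0; 0; 0; 0; 0; 0; 0; 48; 0; 0; 0; 0; 0; 0; 0; 0; 48; 0; 0; 0; 0; 0; 0; 0; 0; 0; 0; 0; 0; 0; 0; 0; 0; 0];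
  [:: 72; 0; 0; 0; 0; 0; 0; 0; 0; 0; 0; 0; 0; 0; 0; 0; 0; 0; 0; 0; 0; 0; 0; 0; 0; 0; 0; 144; 0; 36; 0; 0; 0; 0; 0; 0; 0; 0; 0; 0; 0; 0; 0; 0; 0; 0; 0; 0; 0; 0; 0; 0; 0; 0; 0; 0; 54; 0; 0; 0; 0; 0; 144; 0; 0; 108; 0; 0; 0; 0; 0; 0; 0; 0; 0; 0; 0; 0; 0; 0; 0; 72; 0; 0; 0; 0; 0; 0; 0; 0; 54; 0; 0; 0; 0; 0; 36; 0; 0; 72; 0; 0; 0; 0; 0; 0; 0; 0];
  [:: 48; 0; 0; 0; 0; 0; 0; 0; 0; 0; 0; 0; 0; 0; 0; 0; 0; 0; 0; 0; 0; 0; 0; 0; 0; 0; 0; 96; 0; 0; 0; 0; 0; 0; 0; 0; 0; 0; 0; 0; 0; 0; 0; 0; 0; 0; 0; 0; 0; 0; 0; 0; 0; 0; 48; 72; 0; 0; 0; 0; 0; 0; 0; 0; 0; 0; 0; 0; 0; 0; 0; 0; 0; 0; 0; 0; 0; 0; 0; 0; 0; 40; 0; 0; 24; 0; 0; 0; 0; 0; 0; 0; 0; 0; 0; 0; 0; 0; 0; 0; 0; 0; 0; 0; 0; 0; 0; 0];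
  [:: 72; 0; 0; 0; 0; 0; 0; 0; 0; 0; 0; 0; 0; 0; 0; 0; 0; 0; 0; 0; 0; 0; 0; 0; 0; 0; 0; 144; 0; 72; 0; 0; 144; 0; 0; 0; 0; 0; 0; 0; 0; 0; 0; 0; 0; 0; 0; 0; 0; 0; 0; 0; 0; 0; 48; 60; 72; 0; 0; 48; 0; 0; 0; 0; 108; 0; 0; 0; 0; 0; 0; 0; 0; 0; 0; 0; 0; 0; 0; 0; 0; 24; 0; 0; 48; 0; 0; 48; 0; 0; 60; 0; 0; 24; 0; 0; 0; 0; 0; 0; 0; 0; 0; 0; 0; 0; 0; 0];
  [:: 144; 0; 0; 0; 0; 0; 0; 0; 0; 0; 0; 0; 0; 0; 0; 0; 0; 0; 0; 0; 0; 0; 0; 0; 0; 0; 0; 0; 0; 72; 0; 0; 144; 0; 0; 72; 0; 0; 36; 0; 0; 0; 0; 0; 0; 0; 0; 0; 0; 0; 0; 0; 0; 0; 0; 126; 54; 0; 0; 9; 0; 0; 108; 0; 18; 72; 0; 0; 126; 0; 0; 0; 0; 0; 0; 0; 0; 0; 0; 0; 0; 0; 0; 0; 0; 0; 0; 72; 0; 0; 27; 0; 0; 72; 0; 0; 45; 0; 0; 144; 0; 0; 0; 0; 0; 0; 0; 0];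
  [:: 72; 0; 0; 0; 0; 0; 0; 0; 0; 0; 0; 0; 0; 0; 0; 0; 0; 0; 0; 0; 0; 0; 0; 0; 0; 0; 0; 0; 0; 0; 0; 0; 0; 0; 0; 0; 144; 0; 0; 0; 0; 0; 0; 0; 0; 0; 0; 0; 0; 0; 0; 0; 0; 0; 0; 72; 0; 0; 72; 0; 0; 0; 0; 0; 0; 0; 0; 0; 0; 0; 0; 0; 0; 0; 0; 0; 0; 0; 0; 0; 0; 48; 0; 0; 24; 0; 0; 0; 0; 0; 0; 0; 0; 0; 0; 0; 0; 0; 0; 0; 0; 0; 0; 0; 0; 0; 0; 0];
  [:: 72; 0; 72; 0; 0; 0; 0; 0; 0; 0; 0; 0; 0; 0; 0; 0; 0; 0; 0; 0; 0; 0; 0; 0; 0; 0; 0; 0; 0; 0; 0; 0; 0; 0; 0; 0; 0; 72; 144; 0; 0; 0; 0; 0; 0; 0; 0; 0; 0; 0; 0; 0; 0; 0; 0; 36; 0; 0; 96; 96; 0; 0; 0; 0; 108; 0; 0; 0; 0; 0; 0; 0; 0; 0; 0; 0; 0; 0; 0; 0; 0; 96; 0; 0; 0; 0; 0; 48; 0; 0; 24; 0; 0; 60; 0; 0; 0; 0; 0; 0; 0; 0; 0; 0; 0; 0; 0; 0];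
  [:: 0; 0; 72; 0; 0; 0; 0; 0; 0; 0; 0; 0; 0; 0; 0; 0; 0; 0; 0; 0; 0; 0; 0; 0; 0; 0; 0; 0; 0; 0; 0; 0; 0; 0; 0; 0; 0; 0; 0; 0; 0; 72; 0; 0; 144; 0; 0; 0; 0; 0; 0; 0; 0; 0; 0; 0; 0; 0; 72; 72; 0; 0; 0; 0; 0; 0; 0; 72; 72; 0; 0; 0; 0; 0; 0; 0; 0; 0; 0; 0; 0; 0; 0; 0; 0; 0; 0; 72; 0; 0; 0; 0; 0; 36; 0; 0; 72; 0; 0; 0; 0; 0; 72; 0; 0; 0; 0; 0]].
Definition Ws m n pb (s : seq nat) :=
  if two_parts s then
    match key pb s with Some k => nth 0 (nth [::] table (rowidx m n pb)) k | None => 0 end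
  else 0.
Definition Wn m n pb u v r := Ws m n pb (sort leq [:: u; v; r]).
Definition DD := 288.
Definition loadc m n pb u v :=
  sumn [seq Wn m n pb u v r | r <- iota 0 10 & inV m n r && fulladj pb u r && fulladj pb v r].
Definition check m n pb :=
  all (fun u => all (fun v =>
    if (u < v) && inV m n u && inV m n v && fulladj pb u v then
      (if samep u v then loadc m n pb u v == (if pB u then DD else DD %/ 2)
       else loadc m n pb u v <= DD) else true) (iota 0 10)) (iota 0 10).
Definition L := [:: 0; 1; 6; 7; 8; 9; 15].
Definition valid m n (pb : seq nat) :=
  [&& size pb == 4, all (fun p => p \in L) pb,
      all (fun p => (p == NONE) || (p < 2) || (p < 6 + n)) pb,
      all (fun i => nth NONE pb i == NONE) (iota m (4 - m)),
      uniq (filter (fun p => p != NONE) pb) &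
      count (fun p => (6 <= p) && (p < 10)) pb <= 2].
Fixpoint allseqs k : seq (seq nat) :=
  if k is k'.+1 then [seq x :: s | x <- L, s <- allseqs k'] else [:: [::]].
Definition allcheck :=
  all (fun m => all (fun n => all (fun pb => if valid m n pb then check m n pb else true) (allseqs 4)) [:: 3; 4]) [:: 3; 4].
Lemma allcheck_ok : allcheck = true.
Proof. vm_compute. reflexivity. Qed.
Lemma table_le : all (fun row => all (fun p => p <= DD) row) table.
Proof. vm_compute. reflexivity. Qed.
End Conc.

Import Conc.

Lemma allseqs_mem k s : size s = k -> all (fun p => p \in L) s -> s \in allseqs k.
Proof.
elim: k s => [|k IH] [|x s] // [Hs] /andP[Hx Ha].
change (x :: s \in [seq x :: s | x <- L, s <- allseqs k]).
by apply: (allpairs_f (fun x s => x :: s)) => //; apply: IH.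
Qed.

Lemma check_spec m n pb : m \in [:: 3; 4] -> n \in [:: 3; 4] -> valid m n pb -> check m n pb.
Proof.
move=> Hm Hn Hv; have := allcheck_ok; rewrite /allcheck => /allP /(_ m Hm) /allP /(_ n Hn) /allP.
have Hpb : pb \in allseqs 4.
  by case/and5P: Hv => /eqP Hs HL _ _ _; apply: allseqs_mem.
by move/(_ pb Hpb); rewrite Hv.
Qed.

Lemma check_use m n pb u v : check m n pb -> u < v -> v < 10 ->
  inV m n u -> inV m n v -> fulladj pb u v ->
  if samep u v then loadc m n pb u v = (if pB u then DD else DD %/ 2)
  else loadc m n pb u v <= DD.
Proof.
move=> /allP Hc Huv Hv Hu' Hv' Hf.
have Hu10 : u \in iota 0 10 by rewrite mem_iota /= (ltn_trans Huv Hv).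
have Hv10 : v \in iota 0 10 by rewrite mem_iota.
move: (Hc u Hu10) => /allP /(_ v Hv10); rewrite Huv Hu' Hv' Hf /=.
by case: ifP => _ // /eqP.
Qed.

Lemma Ws_le m n pb s : Ws m n pb s <= DD.
Proof.
rewrite /Ws; case: ifP => // _; case: key => // k.
have := table_le => /allP H.
case: (ltnP (rowidx m n pb) (size table)) => Hi.
- have /H /allP Hr := mem_nth [::] Hi.
  case: (ltnP k (size (nth [::] table (rowidx m n pb)))) => Hk.
  + exact: (Hr _ (mem_nth 0 Hk)).
  + by rewrite nth_default.
- by rewrite (nth_default _ Hi) nth_nil.
Qed.

Lemma Ws_pos m n pb s : 0 < Ws m n pb s -> two_parts s.
Proof. by rewrite /Ws; case: ifP. Qed.

Section Gen.
Variables (T : finType) (adj : rel T).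
Hypothesis (Hsym : symmetric adj) (Hirr : irreflexive adj).

Lemma card3 (x y z : T) : x != y -> x != z -> y != z -> #|[set x; y; z]| = 3.
Proof.
move=> xy xz yz.
rewrite -setUA cardsU1 cards2 yz !inE negb_or xy xz.
by [].
Qed.

Lemma tri3 x y z : adj x y -> adj x z -> adj y z -> is_triangle adj [set x; y; z].
Proof.
move=> hxy hxz hyz.
have xy : x != y by apply: contraTneq hxy => ->; rewrite Hirr.
have xz : x != z by apply: contraTneq hxz => ->; rewrite Hirr.
have yz : y != z by apply: contraTneq hyz => ->; rewrite Hirr.
rewrite /is_triangle card3 //=.
apply/forall_inP => u Hu; apply/forall_inP => v Hv; apply/implyP => uv.
move: Hu Hv uv; rewrite !inE.
by case/orP => [/orP[]|] /eqP-> ; case/orP => [/orP[]|] /eqP-> ; rewrite ?eqxx // => _;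
  rewrite ?(Hsym y x) ?(Hsym z x) ?(Hsym z y) ?hxy ?hxz ?hyz.
Qed.

Lemma load_sum (R : numDomainType) (w : {set T} -> R) x y : adj x y ->
  edge_load adj w x y = (\sum_(z | adj x z && adj y z) w [set x; y; z])%R.
Proof.
move=> hxy.
have xy : x != y by apply: contraTneq hxy => ->; rewrite Hirr.
have inj : {in [pred z | adj x z && adj y z] &, injective (fun z => [set x; y; z])}.
  move=> z z' /andP[hxz hyz] /andP[hxz' hyz'] E.
  have : z \in [set x; y; z'] by rewrite -E !inE eqxx orbT.
  rewrite !inE => /orP[/orP[/eqP e|/eqP e]|/eqP //].
  + by move: hxz; rewrite e Hirr.
  + by move: hyz; rewrite e Hirr.
rewrite /edge_load -(big_imset _ inj) /=.
apply: eq_bigl => t; apply/idP/idP.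
- case/andP => /andP [Ht Hx] Hy.
  case/andP: (Ht) => /eqP c3 /forall_inP Hf.
  have : 0 < #|t :\: [set x; y]|.
    rewrite cardsD (_ : t :&: [set x; y] = [set x; y]) ?cards2 ?xy ?c3 //.
    by apply/setIidPr; apply/subsetP => u; rewrite !inE => /orP[]/eqP->.
  case/card_gt0P => z; rewrite !inE negb_or => /andP[/andP[zx zy] zt].
  apply/imsetP; exists z.
    rewrite inE.
    have := Hf x Hx => /forall_inP /(_ z zt); rewrite eq_sym zx /= => ->.
    by have := Hf y Hy => /forall_inP /(_ z zt); rewrite eq_sym zy.
  have xz : x != z by rewrite eq_sym.
  have yz : y != z by rewrite eq_sym.
  apply/eqP; rewrite eq_sym eqEcard c3 (card3 xy xz yz) leqnn.
  by rewrite andbT; apply/subsetP => u; rewrite !inE => /orP[/orP[]|]/eqP->.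
- case/imsetP => z; rewrite inE => /andP[hxz hyz] ->.
  by rewrite tri3 // !inE !eqxx ?orbT.
Qed.
End Gen.

Lemma samep_all : all (fun u => all (fun v => all (fun r =>
   (samep u v && samep u r) ==> ~~ two_parts [:: u; v; r]) (iota 0 10)) (iota 0 10)) (iota 0 10).
Proof. by vm_compute. Qed.


Lemma samep_trans_all : all (fun u => all (fun v => all (fun r =>
   samep u v ==> (samep u r == samep v r)) (iota 0 10)) (iota 0 10)) (iota 0 10).
Proof. by vm_compute. Qed.
Lemma samep_sym_all : all (fun u => all (fun v => samep u v == samep v u) (iota 0 10)) (iota 0 10).
Proof. by vm_compute. Qed.
Lemma pB_same_all : all (fun u => all (fun v => samep u v ==> (pB u == pB v)) (iota 0 10)) (iota 0 10).
Proof. by vm_compute. Qed.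

Lemma in10 u : u < 10 -> u \in iota 0 10.
Proof. by rewrite mem_iota. Qed.

Lemma samep_zero m n pb u v r : u < 10 -> v < 10 -> r < 10 -> samep u v -> samep u r ->
  Wn m n pb u v r = 0.
Proof.
move=> /in10 hu /in10 hv /in10 hr h1 h2.
have := samep_all => /allP /(_ u hu) /allP /(_ v hv) /allP /(_ r hr).
rewrite h1 h2 /= => /negbTE h3.
rewrite /Wn /Ws; have -> : two_parts (sort leq [:: u; v; r]) = two_parts [:: u; v; r].
  by rewrite /two_parts !(perm_has _ (permEl (perm_sort leq _))).
by rewrite h3.
Qed.

Lemma samep_trans u v r : u < 10 -> v < 10 -> r < 10 -> samep u v -> samep u r = samep v r.
Proof.
move=> /in10 hu /in10 hv /in10 hr h1.
have := samep_trans_all => /allP /(_ u hu) /allP /(_ v hv) /allP /(_ r hr).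
by rewrite h1 => /eqP.
Qed.
Lemma samep_sym u v : u < 10 -> v < 10 -> samep u v = samep v u.
Proof.
move=> /in10 hu /in10 hv.
by have := samep_sym_all => /allP /(_ u hu) /allP /(_ v hv) /eqP.
Qed.
Lemma pB_same u v : u < 10 -> v < 10 -> samep u v -> pB u = pB v.
Proof.
move=> /in10 hu /in10 hv h.
by have := pB_same_all => /allP /(_ u hu) /allP /(_ v hv); rewrite h => /eqP.
Qed.

Lemma Wn_sym m n pb u v r : Wn m n pb u v r = Wn m n pb v u r.
Proof.
rewrite /Wn; congr Ws; apply/perm_sortP; [exact: leq_total|exact: leq_trans|exact: anti_leq|].
by rewrite (perm_catCA [:: u] [:: v] [:: r]).
Qed.

Lemma L_all : all (fun e => ((e < 2) || (6 <= e)) ==> (e \in L)) (iota 0 10).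
Proof. by vm_compute. Qed.
Lemma inL e : e < 10 -> (e < 2) || (6 <= e) -> e \in L.
Proof. by move=> /in10 h; have := L_all => /allP /(_ e h) /implyP. Qed.

Lemma half_eq (R : realFieldType) : (((DD %/ 2)%:R / DD%:R : R) = 2^-1)%R.
Proof.
have -> : DD %/ 2 = 144 by [].
have -> : DD = (144 * 2)%N by [].
by rewrite natrM invfM mulrA divff ?mul1r // pnatr_eq0.
Qed.

Section Main.
Variables (T : finType) (adj : rel T) (A B C : {set T}) (M : {set T * T}).
Hypothesis Hsym : symmetric adj.
Hypothesis Hirr : irreflexive adj.
Hypothesis dAB : [disjoint A & B].
Hypothesis dAC : [disjoint A & C].
Hypothesis dBC : [disjoint B & C].
Hypothesis Hcov : A :|: B :|: C = [set: T].
Hypothesis cA : #|A| = 2.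
Hypothesis cB : (#|B| == 3) || (#|B| == 4).
Hypothesis cC : (#|C| == 3) || (#|C| == 4).
Hypothesis HM1 : forall p, p \in M -> (p.1 \in B) && (p.2 \in A :|: C).
Hypothesis HM2 : forall p q, p \in M -> q \in M -> p != q -> (p.1 != q.1) && (p.2 != q.2).
Hypothesis HMadj : forall b x, b \in B -> x \in A :|: C -> adj b x = ((b, x) \notin M).
Hypothesis HMC : #|[set p in M | p.2 \in C]| <= 2.
Hypothesis HAC : forall a c, a \in A -> c \in C -> ~~ adj a c.

Let m := #|B|.
Let n := #|C|.
Lemma m4 : m <= 4. Proof. by case/orP: cB => /eqP; rewrite /m => ->. Qed.
Lemma n4 : n <= 4. Proof. by case/orP: cC => /eqP; rewrite /n => ->. Qed.

Definition code (x : T) : nat :=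
  if x \in A then index x (enum A)
  else if x \in B then 2 + index x (enum B) else 6 + index x (enum C).

Lemma part x : [|| x \in A, x \in B | x \in C].
Proof. by have : x \in [set: T] by []; rewrite -Hcov !inE -orbA. Qed.

Lemma codeA x : x \in A -> code x < 2.
Proof. by move=> xA; rewrite /code xA -cA cardE index_mem mem_enum. Qed.
Lemma codeB x : x \in B -> (2 <= code x) && (code x < 2 + m).
Proof.
move=> xB; rewrite /code (disjointFl dAB xB) xB leq_addr /= ltn_add2l.
by rewrite /m cardE index_mem mem_enum.
Qed.
Lemma codeC x : x \in C -> (6 <= code x) && (code x < 6 + n).
Proof.
move=> xC; rewrite /code (disjointFl dAC xC) (disjointFl dBC xC) leq_addr /= ltn_add2l.
by rewrite /n cardE index_mem mem_enum.
Qed.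

Lemma pA_code x : pA (code x) = (x \in A).
Proof.
case/or3P: (part x) => xP.
- by rewrite xP /pA codeA.
- have := codeB xP; rewrite /pA (disjointFl dAB xP) => /andP[h _].
  by apply/negbTE; lia.
- have := codeC xP; rewrite /pA (disjointFl dAC xP) => /andP[h _].
  by apply/negbTE; lia.
Qed.
Lemma pB_code x : pB (code x) = (x \in B).
Proof.
case/or3P: (part x) => xP.
- by rewrite (disjointFr dAB xP) /pB; have := codeA xP; case: (code x) => [|[|]].
- have := codeB xP; rewrite /pB xP => /andP[-> h] /=.
  by have := m4; lia.
- have := codeC xP; rewrite /pB (disjointFl dBC xP) => /andP[h _].
  by apply/negbTE; lia.
Qed.
Lemma pC_code x : pC (code x) = (x \in C).
Proof.
case/or3P: (part x) => xP.
- by rewrite (disjointFr dAC xP) /pC; have := codeA xP; case: (code x) => [|[|]].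
- have := codeB xP; rewrite /pC (disjointFr dBC xP) => /andP[_ h].
  by apply/negbTE; have := m4; lia.
- by have := codeC xP; rewrite /pC xP => /andP[].
Qed.

Lemma code_lt10 x : code x < 10.
Proof.
case/or3P: (part x) => xP.
- exact: (leq_trans (codeA xP)).
- by case/andP: (codeB xP) => _ h; have := m4; lia.
- by case/andP: (codeC xP) => _ h; have := n4; lia.
Qed.

Lemma code_inj : injective code.
Proof.
move=> x y E.
case/or3P: (part x) => xP.
- have yP : y \in A by rewrite -pA_code -E pA_code.
  move: E; rewrite /code xP yP => E.
  have hx : x \in enum A by rewrite mem_enum.
  have hy : y \in enum A by rewrite mem_enum.
  by rewrite -(nth_index x hx) E (nth_index x hy).
- have yP : y \in B by rewrite -pB_code -E pB_code.
  move: E; rewrite /code (disjointFl dAB xP) (disjointFl dAB yP) xP yP => /addnI E.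
  have hx : x \in enum B by rewrite mem_enum.
  have hy : y \in enum B by rewrite mem_enum.
  by rewrite -(nth_index x hx) E (nth_index x hy).
- have yP : y \in C by rewrite -pC_code -E pC_code.
  move: E; rewrite /code (disjointFl dAC xP) (disjointFl dAC yP) (disjointFl dBC xP) (disjointFl dBC yP) => /addnI E.
  have hx : x \in enum C by rewrite mem_enum.
  have hy : y \in enum C by rewrite mem_enum.
  by rewrite -(nth_index x hx) E (nth_index x hy).
Qed.

Lemma inV_code x : inV m n (code x).
Proof.
rewrite /inV; case/or3P: (part x) => xP.
- by rewrite codeA.
- by rewrite codeB ?orbT.
- by rewrite codeC ?orbT.
Qed.

Definition codeo (x : T) : 'I_10 := Ordinal (code_lt10 x).

Lemma codeo_inj : injective codeo.
Proof. by move=> x y /(congr1 val) /= /code_inj. Qed.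

Lemma code_surj r : r < 10 -> inV m n r -> exists x, code x = r.
Proof.
move=> r10; have [a0 _] : exists a0, a0 \in A by apply/card_gt0P; rewrite cA.
rewrite /inV => /orP[/orP[h|/andP[h1 h2]]|/andP[h1 h2]].
- have hs : r < size (enum A) by rewrite -cardE cA.
  have hx := mem_nth a0 hs; rewrite mem_enum in hx.
  by exists (nth a0 (enum A) r); rewrite /code hx index_uniq // enum_uniq.
- have hs : r - 2 < size (enum B) by rewrite -cardE -/m; lia.
  have hx := mem_nth a0 hs; rewrite mem_enum in hx.
  exists (nth a0 (enum B) (r - 2)); rewrite /code hx (disjointFl dAB hx) index_uniq ?enum_uniq //.
  lia.
- have hs : r - 6 < size (enum C) by rewrite -cardE -/n; lia.
  have hx := mem_nth a0 hs; rewrite mem_enum in hx.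
  exists (nth a0 (enum C) (r - 6)).
  rewrite /code (disjointFl dAC hx) (disjointFl dBC hx) index_uniq ?enum_uniq //.
  lia.
Qed.

Lemma reindex (F : nat -> nat) :
  \sum_(z : T) F (code z) = \sum_(r < 10 | inV m n r) F r.
Proof.
have -> : \sum_(r < 10 | inV m n r) F r = \sum_(r in [set codeo x | x : T]) F r.
  apply: eq_bigl => r; apply/idP/imsetP.
  - move=> h; have [x hx] := code_surj (ltn_ord r) h.
    by exists x => //; apply: val_inj.
  - by case=> x _ ->; apply: inV_code.
rewrite big_imset /=; last by move=> x y _ _; apply: codeo_inj.
by [].
Qed.

Definition fpb i := if [pick p in M | code p.1 == 2 + i] is Some p then code p.2 else NONE.
Definition pb := mkseq fpb 4.

Lemma nth_pb i : i < 4 -> nth NONE pb i = fpb i.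
Proof. by move=> h; rewrite /pb nth_mkseq. Qed.

Lemma mt_M b x : b \in B -> x \in A :|: C -> ((b, x) \in M) = mt pb (code b) (code x).
Proof.
move=> bB xAC; have := codeB bB => /andP[hb1 hb2].
rewrite /mt pB_code bB /= nth_pb; last by have := m4; lia.
rewrite /fpb; case: pickP => [p /andP[pM /eqP e] | none].
- have e' : p.1 = b by apply: code_inj; lia.
  apply/idP/eqP.
  + move=> bxM; have [->//|ne] := eqVneq p (b, x).
    by move: (HM2 pM bxM ne); rewrite e' eqxx.
  + move/code_inj => e2; suff -> : (b, x) = p by [].
    by case: p e' e2 {e pM} => /= ? ? -> ->.
- have := none (b, x); rewrite /= (_ : 2 + (code b - 2) = code b); last by lia.
  rewrite eqxx andbT => ->; apply/esym/negbTE.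
  by have := code_lt10 x; rewrite /NONE; lia.
Qed.

Lemma samep_code x z : samep (code x) (code z) =
  [|| (x \in A) && (z \in A), (x \in B) && (z \in B) | (x \in C) && (z \in C)].
Proof. by rewrite /samep !pA_code !pB_code !pC_code orbA. Qed.

Lemma notA_AC x : x \notin B -> x \in A :|: C.
Proof.
move=> h; case/or3P: (part x) => xP; first by rewrite inE xP.
  by rewrite xP in h.
by rewrite inE xP orbT.
Qed.

Lemma adj_full_eq x z : ~~ samep (code x) (code z) -> adj x z = fulladj pb (code x) (code z).
Proof.
move=> h; rewrite /fulladj (negbTE h).
have -> : code x != code z.
  apply/eqP => e; move: h; rewrite e samep_code.
  by case/or3P: (part z) => ->; rewrite ?orbT.
rewrite /= !pB_code.
move: h; rewrite samep_code.
case xB : (x \in B); case zB : (z \in B) => //= h.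
- by rewrite orbT in h.
- have zAC := notA_AC (negbT zB).
  by rewrite -mt_M // HMadj.
- have xAC := notA_AC (negbT xB).
  by rewrite Hsym -mt_M // HMadj.
- have xAC := notA_AC (negbT xB); have zAC := notA_AC (negbT zB).
  move: xAC zAC h; rewrite !inE.
  case/orP => xP; case/orP => zP; rewrite ?xP ?zP /=.
  + by [].
  + by move=> _; apply/negbTE; apply: HAC.
  + by move=> _; rewrite Hsym; apply/negbTE; apply: HAC.
  + by rewrite orbT.
Qed.

Lemma adj_full x z : adj x z -> fulladj pb (code x) (code z).
Proof.
move=> h; have [hs|hs] := boolP (samep (code x) (code z)); last by rewrite -adj_full_eq.
rewrite /fulladj hs andbT; apply/eqP => /code_inj e.
by move: h; rewrite e Hirr.
Qed.

Definition Wt (t : {set T}) := Ws m n pb (sort leq [seq code x | x <- enum t]).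
Definition w (R : realFieldType) (t : {set T}) : R :=
  if is_triangle adj t then ((Wt t)%:R / DD%:R)%R else 0%R.

Lemma Wt3 x y z : x != y -> x != z -> y != z ->
  Wt [set x; y; z] = Wn m n pb (code x) (code y) (code z).
Proof.
move=> xy xz yz; rewrite /Wt /Wn; congr Ws.
apply/perm_sortP; [exact: leq_total|exact: leq_trans|exact: anti_leq|].
rewrite (_ : [:: code x; code y; code z] = [seq code u | u <- [:: x; y; z]]) //.
apply: perm_map; apply: uniq_perm; first exact: enum_uniq.
  by rewrite /= !inE negb_or xy xz yz.
by move=> u; rewrite mem_enum !inE orbA.
Qed.

Definition Sn x y := \sum_(z | adj x z && adj y z) Wn m n pb (code x) (code y) (code z).

Lemma load_eq (R : realFieldType) x y : adj x y ->
  edge_load adj (@w R) x y = ((Sn x y)%:R / DD%:R)%R.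
Proof.
move=> hxy; rewrite load_sum // /Sn natr_sum mulr_suml.
apply: eq_bigr => z /andP[hxz hyz].
have ne : forall u v, adj u v -> u != v by move=> u v h; apply: contraTneq h => ->; rewrite Hirr.
by rewrite /w tri3 // Wt3 // ne.
Qed.

Lemma Sf_loadc x y :
  \sum_(z | fulladj pb (code x) (code z) && fulladj pb (code y) (code z))
     Wn m n pb (code x) (code y) (code z) = loadc m n pb (code x) (code y).
Proof.
rewrite big_mkcond /= (reindex (fun r => if fulladj pb (code x) r && fulladj pb (code y) r
   then Wn m n pb (code x) (code y) r else 0)).
rewrite /loadc sumnE big_map big_filter -big_mkcondr.
change (iota 0 10) with (index_iota 0 10); rewrite big_mkord.
by apply: eq_bigl => r; rewrite andbA.
Qed.

Lemma Sn_le x y : Sn x y <= loadc m n pb (code x) (code y).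
Proof.
rewrite -Sf_loadc /Sn [X in _ <= X]big_mkcond [X in X <= _]big_mkcond /=.
apply: leq_sum => z _.
case: ifP => // /andP[hxz hyz].
by rewrite !adj_full.
Qed.

Lemma Sn_eq x y : samep (code x) (code y) -> Sn x y = loadc m n pb (code x) (code y).
Proof.
move=> hs; rewrite -Sf_loadc /Sn big_mkcond [RHS]big_mkcond /=.
apply: eq_bigr => z _.
have [hz|hz] := boolP (samep (code x) (code z)).
  by rewrite samep_zero ?code_lt10 //; case: ifP; case: ifP.
have hz' : ~~ samep (code y) (code z).
  by rewrite -(samep_trans (code_lt10 x) (code_lt10 y) (code_lt10 z) hs).
by rewrite !adj_full_eq.
Qed.

Lemma fpbP i : fpb i != NONE -> exists p, [/\ p \in M, code p.1 = 2 + i & fpb i = code p.2].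
Proof.
rewrite /fpb; case: pickP => [p /andP[pM /eqP e] _|_]; first by exists p.
by rewrite eqxx.
Qed.

Lemma codeAC x : x \in A :|: C -> (code x < 2) || ((6 <= code x) && (code x < 6 + n)).
Proof.
rewrite inE => /orP[xA|xC]; first by rewrite codeA.
by rewrite codeC ?orbT.
Qed.

Lemma valid_pb : valid m n pb.
Proof.
have h1 : size pb == 4 by rewrite size_mkseq.
have h2 : all (fun p => p \in L) pb.
  apply/allP => e /mapP[i _ ->].
  have [/eqP->|/fpbP[p [pM _ ->]]] := boolP (fpb i == NONE); first by [].
  case/andP: (HM1 pM) => _ /codeAC h; apply: inL; first by have := code_lt10 p.2.
  by case/orP: h => [->|/andP[->]] //; rewrite orbT.
have h3 : all (fun p => (p == NONE) || (p < 2) || (p < 6 + n)) pb.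
  apply/allP => e /mapP[i _ ->].
  have [/eqP->|/fpbP[p [pM _ ->]]] := boolP (fpb i == NONE); first by [].
  case/andP: (HM1 pM) => _ /codeAC h.
  by case/orP: h => [->|/andP[_ ->]]; rewrite ?orbT.
have h4 : all (fun i => nth NONE pb i == NONE) (iota m (4 - m)).
  apply/allP => i; rewrite mem_iota => /andP[h1' h2'].
  rewrite nth_pb; last by have := m4; lia.
  apply/negPn/negP => /fpbP[p [pM e _]].
  case/andP: (HM1 pM) => /codeB /andP[_ h5] _; lia.
have h5 : uniq (filter (fun p => p != NONE) pb).
  rewrite /pb /mkseq filter_map map_inj_in_uniq ?filter_uniq ?iota_uniq //.
  move=> i j; rewrite !mem_filter => /andP[hi _] /andP[hj _] e.
  have [p [pM ep fp]] := fpbP hi; have [q [qM eq fq]] := fpbP hj.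
  have e2 : p.2 = q.2 by apply: code_inj; rewrite -fp -fq.
  have [epq|ne] := eqVneq p q; first by move: ep; rewrite epq eq; lia.
  by move: (HM2 pM qM ne); rewrite e2 eqxx andbF.
have h6 : count (fun p => (6 <= p) && (p < 10)) pb <= 2.
  rewrite /pb /mkseq count_map -size_filter.
  set P := preim fpb _.
  set s := filter P (iota 0 4).
  pose g i := [pick p in M | code p.1 == 2 + i].
  have fg i : fpb i = if g i is Some p then code p.2 else NONE by [].
  have hs : size s = size (pmap g s).
    rewrite size_pmap -[LHS]count_predT; apply: eq_in_count => i.
    rewrite mem_filter => /andP[hi _]; move: hi; rewrite /P /= fg.
    by case: (g i).
  have hu : uniq (pmap g s).
    apply: (@pmap_uniq _ _ g (fun p => code p.1 - 2)); last by rewrite filter_uniq ?iota_uniq.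
    move=> i; rewrite /g; case: pickP => [p /andP[_ /eqP e]|] //=; lia.
  rewrite hs; apply: (leq_trans _ HMC); rewrite cardE; apply: uniq_leq_size => // p.
  rewrite mem_pmap => /mapP[i hi hg]; rewrite mem_enum inE.
  move: hi; rewrite mem_filter /P /= fg -hg /= => /andP[/andP[hc _] _].
  move: hg; rewrite /g; case: pickP => [q /andP[qM _] [e]|//]; subst p.
  by rewrite qM /= -pC_code.
by rewrite /valid h1 h2 h3 h4 h5 h6.
Qed.

Lemma m34 : m \in [:: 3; 4]. Proof. by move: cB; rewrite !inE. Qed.
Lemma n34 : n \in [:: 3; 4]. Proof. by move: cC; rewrite !inE. Qed.

Lemma Sn_sym x y : Sn x y = Sn y x.
Proof. by rewrite /Sn; apply: eq_big => z; [rewrite andbC | rewrite Wn_sym]. Qed.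

Lemma Sn_bound x y : adj x y -> Sn x y <= DD /\
  (samep (code x) (code y) -> Sn x y = if pB (code x) then DD else DD %/ 2).
Proof.
wlog: x y / code x < code y.
  move=> H hxy.
  case: (ltngtP (code x) (code y)) => h; first by apply: H.
  - have hyx : adj y x by rewrite Hsym.
    have [h1 h2] := H y x h hyx; rewrite Sn_sym; split => // hs.
    have hs' : samep (code y) (code x) by rewrite samep_sym ?code_lt10.
    by rewrite h2 // (pB_same (code_lt10 y) (code_lt10 x) hs').
  - by move/code_inj: h hxy => ->; rewrite Hirr.
move=> h hxy.
have hc := check_spec m34 n34 valid_pb.
have := check_use hc h (code_lt10 y) (inV_code x) (inV_code y) (adj_full hxy).
case: ifP => hs.
- move=> e; split; last by move=> _; rewrite Sn_eq.
  by rewrite Sn_eq // e; case: ifP.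
- move=> hl; split; first exact: leq_trans (Sn_le x y) hl.
  by [].
Qed.

Lemma hasI (t S : {set T}) : (t :&: S != set0) = has (fun x => x \in S) (enum t).
Proof.
apply/set0Pn/hasP => [[x]|[x]]; rewrite ?inE ?mem_enum.
  by case/andP => h1 h2; exists x; rewrite ?mem_enum.
by move=> h1 h2; exists x; rewrite inE h1.
Qed.

Lemma meets_code t : meets_exactly_two A B C t = two_parts [seq code x | x <- enum t].
Proof.
rewrite /meets_exactly_two /two_parts !has_map !hasI.
by rewrite (eq_has pA_code) (eq_has pB_code) (eq_has pC_code).
Qed.

Lemma main_sec (R : realFieldType) :
  exists w : {set T} -> R,
    [/\ frac_triangle_packing adj w,
        (forall t, (0 < w t)%R -> meets_exactly_two A B C t),
        (forall x y, adj x y -> x \in A -> y \in A -> edge_load adj w x y = 2^-1)%R,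
        (forall x y, adj x y -> x \in C -> y \in C -> edge_load adj w x y = 2^-1)%R &
        (forall x y, adj x y -> x \in B -> y \in B -> edge_load adj w x y = 1)%R].
Proof.
have DDpos : (0 < DD%:R :> R)%R by rewrite ltr0n.
exists (@w R); split.
- split; [|split].
  + by move=> t ht; rewrite /w (negbTE ht).
  + move=> t ht; rewrite /w ht; apply/andP; split.
      by rewrite divr_ge0 ?ler0n.
    by rewrite ler_pdivrMr // mul1r ler_nat Ws_le.
  + move=> x y hxy; rewrite load_eq // ler_pdivrMr // mul1r ler_nat.
    by case: (Sn_bound hxy).
- move=> t; rewrite /w; case: ifP => _; last by rewrite ltxx.
  move=> hpos; have : Wt t != 0.
    by apply: contraTneq hpos => ->; rewrite mul0r ltxx.
  rewrite -lt0n => /Ws_pos; rewrite meets_code /two_parts.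
  by rewrite !(perm_has _ (permEl (perm_sort leq _))).
- move=> x y hxy xA yA; rewrite load_eq //.
  have [_ h] := Sn_bound hxy.
  rewrite h; last by rewrite samep_code xA yA.
  by rewrite pB_code (disjointFr dAB xA) half_eq.
- move=> x y hxy xC yC; rewrite load_eq //.
  have [_ h] := Sn_bound hxy.
  rewrite h; last by rewrite samep_code xC yC !orbT.
  by rewrite pB_code (disjointFl dBC xC) half_eq.
- move=> x y hxy xB yB; rewrite load_eq //.
  have [_ h] := Sn_bound hxy.
  rewrite h; last by rewrite samep_code xB yB orbT.
  by rewrite pB_code xB divff // pnatr_eq0.
Qed.
End Main.

Unset Implicit Arguments.

Theorem proposition7p3 (R : realFieldType) (T : finType) (adj : rel T)
  (A B C : {set T}) (M : {set T * T}) :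
  simple_graph adj ->
  [disjoint A & B] -> [disjoint A & C] -> [disjoint B & C] ->
  A :|: B :|: C = [set: T] ->
  #|A| = 2%N ->
  (#|B| == 3%N) || (#|B| == 4%N) ->
  (#|C| == 3%N) || (#|C| == 4%N) ->
  (* M is a matching of the complete bipartite graph between B and A u C *)
  (forall p, p \in M -> (p.1 \in B) && (p.2 \in A :|: C)) ->
  (forall p q, p \in M -> q \in M -> p != q -> (p.1 != q.1) && (p.2 != q.2)) ->
  (* the B -- (A u C) edges of G are exactly K_{B, A u C} minus M *)
  (forall b x, b \in B -> x \in A :|: C -> adj b x = ((b, x) \notin M)) ->
  (* M has at most two edges between B and C *)
  (#|[set p in M | p.2 \in C]| <= 2)%N ->
  (* no edges between A and C *)
  (forall a c, a \in A -> c \in C -> ~~ adj a c) ->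
  exists w : {set T} -> R,
    [/\ frac_triangle_packing adj w,
        (forall t, (0 < w t)%R -> meets_exactly_two A B C t),
        (forall x y, adj x y -> x \in A -> y \in A -> edge_load adj w x y = 2^-1)%R,
        (forall x y, adj x y -> x \in C -> y \in C -> edge_load adj w x y = 2^-1)%R &
        (forall x y, adj x y -> x \in B -> y \in B -> edge_load adj w x y = 1)%R].
Proof.
move=> [Hs Hi] dAB dAC dBC Hcov cA cB cC HM1 HM2 HMadj HMC HAC.
by apply: (main_sec Hs Hi dAB dAC dBC Hcov cA cB cC HM1 HM2 HMadj HMC HAC).
Qed.
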